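(* Let $\lambda\in\mathbb{C}$ with $\lambda^6\neq0,1$ and let $w\in R=\mathbb{C}[x_0,\dots,x_{11},u_1,u_2]$ be \[w=u_1(x_0^3x_6^3+x_1^3x_7^3+x_2^3x_8^3-3\lambda x_3x_4x_5x_6x_7x_8)+u_2(x_3^3x_9^3+x_4^3x_{10}^3+x_5^3x_{11}^3-3\lambda x_0x_1x_2x_9x_{10}x_{11}).\] Let $\mathcal{T}$ be any triangulation of the point configuration $\mathfrak{C}=\{P_0,\dots,P_{11},S_1,S_2\}$ satisfying: (1) $\mathcal{T}$ contains the six simplices with vertex sets $\{P_i:i\in I\}\cup\{S_1,S_2\}$, $I\subseteq\{0,\dots,5\}$, $|I|=5$ (the set $\mathcal{T}_0$); (2) every simplex in $\mathcal{T}\setminus\mathcal{T}_0$ satisfies (A) or (B), where (A): none of $S_1,P_6,P_7,P_8$ is a vertex and for some $j\in\{3,4,5\}$ neither $P_j$ nor $P_{6+j}$ is a vertex; (B): none of $S_2,P_9,P_{10},P_{11}$ is a vertex and for some $j\in\{0,1,2\}$ neither $P_j$ nor $P_{6+j}$ is a vertex. Define \[\mathcal{I}=\Big\langle\prod_{i\notin I}x_i\prod_{j\notin J}u_j : \{P_i\}_{i\in I}\cup\{S_j\}_{j\in J}\text{ is the vertex set of a simplex of }\mathcal{T}\Big\rangle,\] \[\mathcal{J}=\Big\langle\prod_{i\notin I}x_i : \{P_i\}_{i\in I}\cup\{S_1,S_2\}\text{ is the vertex set of a simplex of }\mathcal{T}\Big\rangle.\] Then $\mathcal{I}\subseteq\sqrt{\langle\partial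 w\rangle+\mathcal{J}}$, where $\langle\partial w\rangle$ is the ideal generated by all partial derivatives of $w$.
   Context: $P_0=(3,0,0,-1,-1,0,1)$, $P_1=(0,3,0,-1,-1,0,1)$, $P_2=(0,0,3,-1,-1,0,1)$, $P_3=(-1,-1,-1,3,0,1,0)$, $P_4=(-1,-1,-1,0,3,1,0)$, $P_5=(-1,-1,-1,0,0,1,0)$, $P_6=(2,-1,-1,0,0,1,0)$, $P_7=(-1,2,-1,0,0,1,0)$, $P_8=(-1,-1,2,0,0,1,0)$, $P_9=(0,0,0,2,-1,0,1)$, $P_{10}=(0,0,0,-1,2,0,1)$, $P_{11}=(0,0,0,-1,-1,0,1)$, $S_1=(0,0,0,0,0,1,0)$, $S_2=(0,0,0,0,0,0,1)$ in $\mathbb{R}^7$. The variable $x_i$ corresponds to $P_i$ and $u_j$ to $S_j$. *)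

(* Defs.v *)
From HB Require Import structures.
From mathcomp Require Import all_boot all_order all_algebra.
From mathcomp Require Import Rstruct.
From mathcomp Require Import complex.
From mathcomp Require Import mpoly.
From Stdlib Require Rdefinitions.

Set Implicit Arguments.
Unset Strict Implicit.
Unset Printing Implicit Defensive.

Import GRing.Theory Num.Theory.
Local Open Scope ring_scope.

Notation RR := Rdefinitions.R.
Definition CC : fieldType := complex RR.

(* Index convention on 'I_14:
     i < 12  <->  P_i ,   12 <-> S_1 ,   13 <-> S_2.
   The same index convention is used for the variables of the polynomial
   ring: 'X_i = x_i for i < 12, 'X_12 = u_1, 'X_13 = u_2. *)

Definition pt_table : seq (seq int) :=
  [:: [:: 3; 0; 0; -1; -1; 0; 1];
      [:: 0; 3; 0; -1; -1; 0; 1];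
      [:: 0; 0; 3; -1; -1; 0; 1];
      [:: -1; -1; -1; 3; 0; 1; 0];
      [:: -1; -1; -1; 0; 3; 1; 0];
      [:: -1; -1; -1; 0; 0; 1; 0];
      [:: 2; -1; -1; 0; 0; 1; 0];
      [:: -1; 2; -1; 0; 0; 1; 0];
      [:: -1; -1; 2; 0; 0; 1; 0];
      [:: 0; 0; 0; 2; -1; 0; 1];
      [:: 0; 0; 0; -1; 2; 0; 1];
      [:: 0; 0; 0; -1; -1; 0; 1];
      [:: 0; 0; 0; 0; 0; 1; 0];
      [:: 0; 0; 0; 0; 0; 0; 1]].

Definition pt (i : 'I_14) : 'rV[RR]_7 :=
  \row_(j < 7) ((nth 0 (nth [::] pt_table i) j)%:~R).

Definition in_conv (s : {set 'I_14}) (x : 'rV[RR]_7) : Prop :=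
  exists t : 'I_14 -> RR,
    [/\ forall i, 0 <= t i, forall i, i \notin s -> t i = 0,
        \sum_i t i = 1 & x = \sum_i t i *: pt i].

Definition in_aff (s : {set 'I_14}) (x : 'rV[RR]_7) : Prop :=
  exists t : 'I_14 -> RR,
    [/\ forall i, i \notin s -> t i = 0,
        \sum_i t i = 1 & x = \sum_i t i *: pt i].

Definition aff_indep (s : {set 'I_14}) : Prop :=
  forall t : 'I_14 -> RR,
    (forall i, i \notin s -> t i = 0) ->
    \sum_i t i = 0 -> \sum_i t i *: pt i = 0 ->
    forall i, t i = 0.

(* A triangulation of the configuration {pt i}, given as the set of
   vertex sets of its maximal simplices: full-dimensional simplices
   (affinely independent, spanning the affine hull of the configuration)
   whose convex hulls cover the convex hull of the configuration and
   intersect properly (in a common face). *)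
Definition triangulation (T : {set {set 'I_14}}) : Prop :=
  [/\ forall s, s \in T -> aff_indep s /\ (forall j, in_aff s (pt j)),
      forall x, in_conv setT x -> exists2 s, s \in T & in_conv s x
    & forall s s' x, s \in T -> s' \in T ->
        in_conv s x -> in_conv s' x -> in_conv (s :&: s') x].

Definition T0 : {set {set 'I_14}} :=
  [set [set i : 'I_14 | ((i < 6)%N && (i != k :> nat)) || (12 <= i)%N]
     | k : 'I_6].

Definition condA (s : {set 'I_14}) : Prop :=
  (forall i : 'I_14, i \in s -> (val i \notin [:: 12; 6; 7; 8])%N) /\
  exists2 j : nat, (j \in [:: 3; 4; 5])%N &
     (forall i : 'I_14, i \in s -> (val i != j) && (val i != j + 6))%N.

Definition condB (s : {set 'I_14}) : Prop :=
  (forall i : 'I_14, i \in s -> (val i \notin [:: 13; 9; 10; 11])%N) /\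
  exists2 j : nat, (j \in [:: 0; 1; 2])%N &
     (forall i : 'I_14, i \in s -> (val i != j) && (val i != j + 6))%N.

Notation Rpoly := {mpoly CC[14]}.

Definition X (i : nat) : Rpoly := 'X_(inord i).

Definition w (lam : CC) : Rpoly :=
  X 12 * (X 0 ^+ 3 * X 6 ^+ 3 + X 1 ^+ 3 * X 7 ^+ 3 + X 2 ^+ 3 * X 8 ^+ 3
           - (3 * lam)%:MP * X 3 * X 4 * X 5 * X 6 * X 7 * X 8)
  + X 13 * (X 3 ^+ 3 * X 9 ^+ 3 + X 4 ^+ 3 * X 10 ^+ 3 + X 5 ^+ 3 * X 11 ^+ 3
           - (3 * lam)%:MP * X 0 * X 1 * X 2 * X 9 * X 10 * X 11).

Definition in_ideal (G : Rpoly -> Prop) (p : Rpoly) : Prop :=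
  exists (n : nat) (r g : 'I_n -> Rpoly),
    (forall k, G (g k)) /\ p = \sum_(k < n) r k * g k.

Definition in_radical (G : Rpoly -> Prop) (p : Rpoly) : Prop :=
  exists m : nat, in_ideal G (p ^+ m).

Definition genI (T : {set {set 'I_14}}) (p : Rpoly) : Prop :=
  exists2 s, s \in T & p = \prod_(i : 'I_14 | i \notin s) 'X_i.

Definition genJ (T : {set {set 'I_14}}) (p : Rpoly) : Prop :=
  exists2 s, s \in T /\ (inord 12 \in s /\ inord 13 \in s) &
    p = \prod_(i : 'I_14 | ((i < 12)%N && (i \notin s))) 'X_i.

Definition genDwJ (lam : CC) (T : {set {set 'I_14}}) (p : Rpoly) : Prop :=
  (exists i : 'I_14, p = mderiv i (w lam)) \/ genJ T p.

(* Main.v *)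
Require Import Defs.
From HB Require Import structures.
From mathcomp Require Import all_boot all_order all_algebra.
From mathcomp Require Import Rstruct complex mpoly.
From mathcomp Require Import ring.
Import GRing.Theory Num.Theory.
Local Open Scope ring_scope.

Section Abs.
Variable R : comRingType.
Variable Id : R -> Prop.
Hypothesis Id0 : Id 0.
Hypothesis IdD : forall x y, Id x -> Id y -> Id (x + y).
Hypothesis IdM : forall r x, Id x -> Id (r * x).

Lemma IdMr x r : Id x -> Id (x * r).
Proof. by move=> h; rewrite mulrC; apply: IdM. Qed.

Lemma IdMn x k : Id x -> Id (x *+ k).
Proof. by move=> h; rewrite -mulr_natl; apply: IdM. Qed.

Lemma IdB x y : Id x -> Id y -> Id (x - y).
Proof. by move=> hx hy; apply: IdD => //; rewrite -mulN1r; apply: IdM. Qed.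

Lemma rad_add f g n m : Id (f ^+ n) -> Id (g ^+ m) -> Id ((f + g) ^+ (n + m)).
Proof.
move=> hf hg; rewrite exprDn.
apply: (big_ind Id) => // i _; apply: IdMn.
case: (ltnP i m) => him.
- have -> : (n + m - i = n + (m - i))%N by rewrite addnBA // ltnW.
  by rewrite exprD -mulrA; apply: IdMr.
- by rewrite -(subnK him) exprD mulrA; apply: IdM.
Qed.

Definition Q a f := exists k n, Id (a ^+ k * f ^+ n).

Lemma QI a f : Id f -> Q a f.
Proof. by move=> h; exists 0%N, 1%N; rewrite expr0 mul1r expr1. Qed.

Lemma QM a f g : Q a f -> Q a (g * f).
Proof.
case=> k [n h]; exists k, n.
by rewrite exprMn mulrCA; apply: IdM.
Qed.

Lemma Qeq a f g : Q a f -> f = g -> Q a g.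
Proof. by move=> h <-. Qed.

Lemma QD a f g : Q a f -> Q a g -> Q a (f + g).
Proof.
case=> k1 [n1 h1] [k2 [n2 h2]]; exists (k1 + k2)%N, (n1 + n2)%N.
rewrite exprDn mulr_sumr.
apply: (big_ind Id) => // i _; rewrite mulrnAr; apply: IdMn.
case: (ltnP i n2) => him.
- have -> : (n1 + n2 - i = n1 + (n2 - i))%N by rewrite addnBA // ltnW.
  have -> : a ^+ (k1 + k2) * (f ^+ (n1 + (n2 - i)) * g ^+ i) =
     (a ^+ k2 * f ^+ (n2 - i) * g ^+ i) * (a ^+ k1 * f ^+ n1).
    rewrite !exprD; ring.
  by apply: IdM.
- rewrite -(subnK him).
  have -> : a ^+ (k1 + k2) * (f ^+ (n1 + n2 - (i - n2 + n2)) * g ^+ (i - n2 + n2)) =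
     (a ^+ k1 * f ^+ (n1 + n2 - (i - n2 + n2)) * g ^+ (i - n2)) * (a ^+ k2 * g ^+ n2).
    rewrite !exprD; ring.
  by apply: IdM.
Qed.

Lemma QB a f g : Q a f -> Q a g -> Q a (f - g).
Proof. by move=> hf hg; apply: QD => //; rewrite -mulN1r; apply: QM. Qed.

Lemma Qcancel a f g h r : Q a (f * g) -> g * h = a ^+ r -> Q a f.
Proof.
case=> k [n H] e; exists (k + r * n)%N, n.
have -> : a ^+ (k + r * n) * f ^+ n = h ^+ n * (a ^+ k * (f * g) ^+ n).
  by rewrite exprD exprM -e !exprMn; ring.
by apply: IdM.
Qed.

Lemma Qpow a f m : Q a (f ^+ m) -> Q a f.
Proof. by case=> k [n h]; exists k, (m * n)%N; rewrite exprM. Qed.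

Lemma Q1 a : Q a 1 -> exists k, Id (a ^+ k).
Proof. by case=> k [n h]; exists k; move: h; rewrite expr1n mulr1. Qed.

Lemma main_abs (l il i3 U V a0 a1 a2 b6 b7 b8 c3 c4 c5 d9 d10 d11 : R) :
  il * l = 1 -> i3 * 3 = 1 ->
  Id (c3*b6*b7*b8*d9*d10*d11) ->
  Id (3 * (U*a0^+2*b6^+3) - 3* l *(V*a1*a2*d9*d10*d11)) ->
  Id (3*(U*a0^+3*b6^+2) - 3* l *(U*c3*c4*c5*b7*b8)) ->
  Id (3*(V*c3^+2*d9^+3) - 3* l *(U*c4*c5*b6*b7*b8)) ->
  Id (3*(V*c4^+2*d10^+3) - 3* l *(U*c3*c5*b6*b7*b8)) ->
  Id (3*(V*c5^+2*d11^+3) - 3* l *(U*c3*c4*b6*b7*b8)) ->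
  Id (c3^+3*d9^+3 + c4^+3*d10^+3 + c5^+3*d11^+3 - 3* l *(a0*a1*a2*d9*d10*d11)) ->
  exists k, Id ((U*c3*b6*b7*b8*d9) ^+ k).
Proof.
set a := U*c3*b6*b7*b8*d9.
move=> hl h3 HJ H0 H6 H3 H4 H5 HG; apply: Q1.
have Qa0 : Q a a0.
  apply: (@Qpow _ _ 2).
  apply: (@Qcancel _ _ (3*U*c3*b6^+4*b7*b8) (i3 * (U^+3*c3^+3*b7^+3*b8^+3*d9^+4)) 4).
    apply: QI.
    have -> : a0 ^+ 2 * (3 * U * c3 * b6 ^+ 4 * b7 * b8) =
      (c3*b6*b7*b8) * (3 * (U*a0^+2*b6^+3) - 3* l *(V*a1*a2*d9*d10*d11))
      + (3* l *V*a1*a2) * (c3*b6*b7*b8*d9*d10*d11) by ring.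
    by apply: IdD; apply: IdM.
  have -> : 3 * U * c3 * b6 ^+ 4 * b7 * b8 *
     (i3 * (U ^+ 3 * c3 ^+ 3 * b7 ^+ 3 * b8 ^+ 3 * d9 ^+ 4)) = (i3 * 3) * a ^+ 4.
    rewrite /a; ring.
  by rewrite h3 mul1r.
have Qc45 : Q a (c4 * c5).
  apply: (@Qcancel _ _ (3* l *U*c3*b6*b7*b8) (i3 * il * d9) 1).
    apply: (@Qeq _ ((3*U*a0^+2*b6^+3)*a0 - b6 * (3*(U*a0^+3*b6^+2) - 3* l *(U*c3*c4*c5*b7*b8)))).
      by apply: QB; [apply: QM | apply: QI; apply: IdM].
    ring.
  have -> : 3 * l * U * c3 * b6 * b7 * b8 * (i3 * il * d9) = (i3 * 3) * (il * l) * a ^+ 1.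
    rewrite /a; ring.
  by rewrite h3 hl !mul1r.
have QV : Q a V.
  apply: (@Qcancel _ _ (3*c3^+2*d9^+3) (i3 * (U^+3*c3*b6^+3*b7^+3*b8^+3)) 3).
    apply: (@Qeq _ ((3*(V*c3^+2*d9^+3) - 3* l *(U*c4*c5*b6*b7*b8)) + (3* l *U*b6*b7*b8) * (c4 * c5))).
      by apply: QD; [apply: QI | apply: QM].
    ring.
  have -> : 3 * c3 ^+ 2 * d9 ^+ 3 * (i3 * (U ^+ 3 * c3 * b6 ^+ 3 * b7 ^+ 3 * b8 ^+ 3)) =
     (i3 * 3) * a ^+ 3.
    rewrite /a; ring.
  by rewrite h3 mul1r.
have Qc5 : Q a c5.
  apply: (@Qcancel _ _ (3* l *U*c3*b6*b7*b8) (i3 * il * d9) 1).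
    apply: (@Qeq _ ((3*c4^+2*d10^+3) * V - (3*(V*c4^+2*d10^+3) - 3* l *(U*c3*c5*b6*b7*b8)))).
      by apply: QB; [apply: QM | apply: QI].
    ring.
  have -> : 3 * l * U * c3 * b6 * b7 * b8 * (i3 * il * d9) = (i3 * 3) * (il * l) * a ^+ 1.
    rewrite /a; ring.
  by rewrite h3 hl !mul1r.
have Qc4 : Q a c4.
  apply: (@Qcancel _ _ (3* l *U*c3*b6*b7*b8) (i3 * il * d9) 1).
    apply: (@Qeq _ ((3*c5^+2*d11^+3) * V - (3*(V*c5^+2*d11^+3) - 3* l *(U*c3*c4*b6*b7*b8)))).
      by apply: QB; [apply: QM | apply: QI].
    ring.
  have -> : 3 * l * U * c3 * b6 * b7 * b8 * (i3 * il * d9) = (i3 * 3) * (il * l) * a ^+ 1.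
    rewrite /a; ring.
  by rewrite h3 hl !mul1r.
apply: (@Qcancel _ _ (c3^+3*d9^+3) (U^+3*b6^+3*b7^+3*b8^+3) 3).
  apply: (@Qeq _ ((c3^+3*d9^+3 + c4^+3*d10^+3 + c5^+3*d11^+3 - 3* l *(a0*a1*a2*d9*d10*d11))
     - (c4^+2*d10^+3) * c4 - (c5^+2*d11^+3) * c5 + (3* l *a1*a2*d9*d10*d11) * a0)).
    apply: QD; last by apply: QM.
    by apply: QB; [apply: QB; [apply: QI|apply: QM]|apply: QM].
  ring.
by rewrite /a; ring.
Qed.

End Abs.

Section Ideal.
Variable G : Rpoly -> Prop.
Lemma in_ideal0 : in_ideal G 0.
Proof. by exists 0%N, (fun=> 0), (fun=> 0); split; [case | rewrite big_ord0]. Qed.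
Lemma in_idealD x y : in_ideal G x -> in_ideal G y -> in_ideal G (x + y).
Proof.
case=> n1 [r1 [g1 [h1 ->]]] [n2 [r2 [g2 [h2 ->]]]].
exists (n1 + n2)%N, (fun k => match split k with inl i => r1 i | inr j => r2 j end),
  (fun k => match split k with inl i => g1 i | inr j => g2 j end); split.
  by move=> k; case: (split k).
rewrite big_split_ord /=; congr (_ + _); apply: eq_bigr => i _.
  by have -> : split (lshift n2 i) = inl i by rewrite -[lshift _ _]/(unsplit (inl i)) unsplitK.
by have -> : split (rshift n1 i) = inr i by rewrite -[rshift _ _]/(unsplit (inr i)) unsplitK.
Qed.
Lemma in_idealM r x : in_ideal G x -> in_ideal G (r * x).
Proof.
case=> n [r1 [g1 [h1 ->]]]; exists n, (fun k => r * r1 k), g1; split => //.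
by rewrite mulr_sumr; apply: eq_bigr => i _; rewrite mulrA.
Qed.
Lemma in_idealG x : G x -> in_ideal G x.
Proof. by move=> h; exists 1%N, (fun=> 1), (fun=> x); split => //; rewrite big_ord1 mul1r. Qed.
End Ideal.

Lemma inord_eq (a b : nat) : (a < 14)%N -> (b < 14)%N -> ((inord a : 'I_14) == inord b) = (a == b).
Proof. by move=> ha hb; rewrite -val_eqE /= !inordK. Qed.

Lemma dX (i : 'I_14) k : mderiv i (X k) = (i == inord k)%:R.
Proof.
rewrite /X mderivX mnm1E eq_sym; case: eqP => [->|_]; last by rewrite scale0r.
have -> : (U_(inord k) - U_(inord k))%MM = 0%MM :> 'X_{1..14}.
  by apply/mnmP => j; rewrite mnmBE subnn mnm0E.
by rewrite mpolyX0 scale1r.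
Qed.

Lemma C3 (lam : CC) : (3 * lam)%:MP = 3 * lam%:MP :> Rpoly.
Proof. by rewrite rmorphM /= rmorph_nat. Qed.

Lemma dP3 (i : 'I_14) (p : Rpoly) : mderiv i (p ^+ 3) = 3 * p ^+ 2 * mderiv i p.
Proof. have -> : p ^+ 3 = p * (p * p) by rewrite !exprS expr0 mulr1.
rewrite !mderivM expr2; ring. Qed.

Definition dl (i : 'I_14) k : Rpoly := (i == inord k)%:R.

Lemma dw_gen lam (i : 'I_14) : mderiv i (w lam) =
  let c := (3 * lam)%:MP in
  dl i 12 * (X 0 ^+ 3 * X 6 ^+ 3 + X 1 ^+ 3 * X 7 ^+ 3 + X 2 ^+ 3 * X 8 ^+ 3
           - c * X 3 * X 4 * X 5 * X 6 * X 7 * X 8)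
  + X 12 * (3 * X 0 ^+ 2 * dl i 0 * X 6 ^+ 3 + X 0 ^+ 3 * (3 * X 6 ^+ 2 * dl i 6)
          + 3 * X 1 ^+ 2 * dl i 1 * X 7 ^+ 3 + X 1 ^+ 3 * (3 * X 7 ^+ 2 * dl i 7)
          + 3 * X 2 ^+ 2 * dl i 2 * X 8 ^+ 3 + X 2 ^+ 3 * (3 * X 8 ^+ 2 * dl i 8)
          - c * (dl i 3 * X 4 * X 5 * X 6 * X 7 * X 8 + X 3 * dl i 4 * X 5 * X 6 * X 7 * X 8
                 + X 3 * X 4 * dl i 5 * X 6 * X 7 * X 8 + X 3 * X 4 * X 5 * dl i 6 * X 7 * X 8
                 + X 3 * X 4 * X 5 * X 6 * dl i 7 * X 8 + X 3 * X 4 * X 5 * X 6 * X 7 * dl i 8))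
  + dl i 13 * (X 3 ^+ 3 * X 9 ^+ 3 + X 4 ^+ 3 * X 10 ^+ 3 + X 5 ^+ 3 * X 11 ^+ 3
           - c * X 0 * X 1 * X 2 * X 9 * X 10 * X 11)
  + X 13 * (3 * X 3 ^+ 2 * dl i 3 * X 9 ^+ 3 + X 3 ^+ 3 * (3 * X 9 ^+ 2 * dl i 9)
          + 3 * X 4 ^+ 2 * dl i 4 * X 10 ^+ 3 + X 4 ^+ 3 * (3 * X 10 ^+ 2 * dl i 10)
          + 3 * X 5 ^+ 2 * dl i 5 * X 11 ^+ 3 + X 5 ^+ 3 * (3 * X 11 ^+ 2 * dl i 11)
          - c * (dl i 0 * X 1 * X 2 * X 9 * X 10 * X 11 + X 0 * dl i 1 * X 2 * X 9 * X 10 * X 11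
                 + X 0 * X 1 * dl i 2 * X 9 * X 10 * X 11 + X 0 * X 1 * X 2 * dl i 9 * X 10 * X 11
                 + X 0 * X 1 * X 2 * X 9 * dl i 10 * X 11 + X 0 * X 1 * X 2 * X 9 * X 10 * dl i 11)).
Proof.
rewrite /w /=.
Time rewrite !(mderivD, mderivB, mderivN, mderivM, mderivC, dX, dP3).
rewrite /dl. Time ring.
Qed.

Lemma dw0 lam : mderiv (inord 0) (w lam) = let L := lam%:MP in 3*(X 12*X 0^+2*X 6^+3) - 3*L*(X 13*X 1*X 2*X 9*X 10*X 11).
Proof. rewrite dw_gen /dl /= !inord_eq //= C3; ring. Qed.

Lemma dw1 lam : mderiv (inord 1) (w lam) = let L := lam%:MP in 3*(X 12*X 1^+2*X 7^+3) - 3*L*(X 13*X 0*X 2*X 9*X 10*X 11).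
Proof. rewrite dw_gen /dl /= !inord_eq //= C3; ring. Qed.

Lemma dw2 lam : mderiv (inord 2) (w lam) = let L := lam%:MP in 3*(X 12*X 2^+2*X 8^+3) - 3*L*(X 13*X 0*X 1*X 9*X 10*X 11).
Proof. rewrite dw_gen /dl /= !inord_eq //= C3; ring. Qed.

Lemma dw3 lam : mderiv (inord 3) (w lam) = let L := lam%:MP in 3*(X 13*X 3^+2*X 9^+3) - 3*L*(X 12*X 4*X 5*X 6*X 7*X 8).
Proof. rewrite dw_gen /dl /= !inord_eq //= C3; ring. Qed.

Lemma dw4 lam : mderiv (inord 4) (w lam) = let L := lam%:MP in 3*(X 13*X 4^+2*X 10^+3) - 3*L*(X 12*X 3*X 5*X 6*X 7*X 8).
Proof. rewrite dw_gen /dl /= !inord_eq //= C3; ring. Qed.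

Lemma dw5 lam : mderiv (inord 5) (w lam) = let L := lam%:MP in 3*(X 13*X 5^+2*X 11^+3) - 3*L*(X 12*X 3*X 4*X 6*X 7*X 8).
Proof. rewrite dw_gen /dl /= !inord_eq //= C3; ring. Qed.

Lemma dw6 lam : mderiv (inord 6) (w lam) = let L := lam%:MP in 3*(X 12*X 0^+3*X 6^+2) - 3*L*(X 12*X 3*X 4*X 5*X 7*X 8).
Proof. rewrite dw_gen /dl /= !inord_eq //= C3; ring. Qed.

Lemma dw9 lam : mderiv (inord 9) (w lam) = let L := lam%:MP in 3*(X 13*X 3^+3*X 9^+2) - 3*L*(X 13*X 0*X 1*X 2*X 10*X 11).
Proof. rewrite dw_gen /dl /= !inord_eq //= C3; ring. Qed.

Lemma dw12 lam : mderiv (inord 12) (w lam) = let L := lam%:MP in X 0^+3*X 6^+3 + X 1^+3*X 7^+3 + X 2^+3*X 8^+3 - 3*L*(X 3*X 4*X 5*X 6*X 7*X 8).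
Proof. rewrite dw_gen /dl /= !inord_eq //= C3; ring. Qed.

Lemma dw13 lam : mderiv (inord 13) (w lam) = let L := lam%:MP in X 3^+3*X 9^+3 + X 4^+3*X 10^+3 + X 5^+3*X 11^+3 - 3*L*(X 0*X 1*X 2*X 9*X 10*X 11).
Proof. rewrite dw_gen /dl /= !inord_eq //= C3; ring. Qed.


Lemma prod_list (l : seq nat) : uniq l -> all (fun k => k < 14)%N l ->
  \prod_(i : 'I_14 | val i \in l) 'X_i = \prod_(k <- l) X k :> Rpoly.
Proof.
elim: l => [|k l IH] /=; first by move=> _ _; rewrite big_nil big_pred0.
case/andP=> kl ul /andP[kb lb].
rewrite (bigD1 (inord k)) /=; last by rewrite inordK // mem_head.
rewrite big_cons -IH //; congr (_ * _); apply: eq_bigl => i.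
rewrite in_cons; case: (i =P inord k) => [->|ne] /=.
  by rewrite inordK // (negbTE kl) eqxx.
rewrite andbT; case: eqP => //= e; case: ne; apply: val_inj; by rewrite /= e inordK.
Qed.

Lemma factor (s : {set 'I_14}) (l : seq nat) : uniq l -> all (fun k => k < 14)%N l ->
  (forall i : 'I_14, i \in s -> val i \notin l) ->
  exists r, \prod_(i | i \notin s) 'X_i = \prod_(k <- l) X k * r :> Rpoly.
Proof.
move=> ul lb hs; exists (\prod_(i | (i \notin s) && (val i \notin l)) 'X_i).
rewrite (bigID (fun i : 'I_14 => val i \in l)) /= -prod_list //; congr (_ * _).
apply: eq_bigl => i; case: (boolP (val i \in l)) => h; rewrite ?andbT ?andbF //.
by apply/negP => /hs; rewrite h.
Qed.

Definition sk (k : 'I_6) : {set 'I_14} :=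
  [set i : 'I_14 | ((i < 6)%N && (i != k :> nat)) || (12 <= i)%N].

Lemma genJ_T0 (T : {set {set 'I_14}}) (j : nat) : (j < 6)%N -> T0 \subset T ->
  genJ T (X j * X 6 * X 7 * X 8 * X 9 * X 10 * X 11).
Proof.
move=> hj hT; exists (sk (inord j)).
  split; first by apply: (subsetP hT); apply: imset_f.
  by rewrite !inE !inordK.
have -> : X j * X 6 * X 7 * X 8 * X 9 * X 10 * X 11 =
  \prod_(k <- [:: j; 6; 7; 8; 9; 10; 11]) X k by rewrite !big_cons big_nil; ring.
rewrite -prod_list; last by rewrite /= !andbT; apply/(leq_trans hj).
  apply: eq_bigl => i; rewrite !inE inordK //.
  case: i => m hm /=; move: hj hm.
  by case: j => [|[|[|[|[|[|j]]]]]] //= _; do 14? (case: m => [|m] //).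
by case: j hj => [|[|[|[|[|[|j]]]]]].
Qed.

From mathcomp Require Import zify.

Theorem mainTheorem10 (lam : CC) (T : {set {set 'I_14}}) :
  lam ^+ 6 != 0 -> lam ^+ 6 != 1 ->
  triangulation T ->
  T0 \subset T ->
  (forall s, s \in T -> s \notin T0 -> condA s \/ condB s) ->
  forall p : Rpoly, in_ideal (genI T) p -> in_radical (genDwJ lam T) p.
Proof.
move=> h6 _ _ hT hAB p.
pose G := genDwJ lam T.
have I0 := in_ideal0 G.
have IDd := @in_idealD G.
have IM := @in_idealM G.
have IE : forall x y, in_ideal G x -> x = y -> in_ideal G y by move=> x y h <-.
have hl : lam != 0 by apply: contra h6 => /eqP ->; rewrite expr0n.
have il : (lam^-1)%:MP * lam%:MP = 1 :> Rpoly by rewrite -rmorphM /= mulVf.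
have i3 : ((3:CC)^-1)%:MP * 3 = 1 :> Rpoly.
  have -> : (3:Rpoly) = (3:CC)%:MP by rewrite rmorph_nat.
  by rewrite -rmorphM /= mulVf // pnatr_eq0.
have HD : forall k, (k < 14)%N -> in_ideal G (mderiv (inord k) (w lam)).
  by move=> k _; apply: in_idealG; left; exists (inord k).
have HJ : forall j, (j < 6)%N -> in_ideal G (X j * X 6 * X 7 * X 8 * X 9 * X 10 * X 11).
  by move=> j hj; apply: in_idealG; right; apply: genJ_T0.
have Key : forall q, genI T q -> in_radical G q.
  move=> q [s sT ->].
  case: (boolP ((inord 12 \in s) && (inord 13 \in s))) => [/andP[h12 h13]|hn].
    exists 1%N; rewrite expr1; apply: in_idealG; right; exists s => //.
    apply: eq_bigl => i; case: (boolP (i \in s)) => his; rewrite ?andbF ?andbT //=.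
    case: i his => m hm his; suff : (m < 12)%N by []; rewrite ltnNge; apply/negP => hi.
    have [em|ne] := eqVneq m 12.
      subst m; have e : Ordinal hm = inord 12 by apply: val_inj; rewrite /= inordK.
      by rewrite e h12 in his.
    have em : m = 13 by lia.
    subst m; have e : Ordinal hm = inord 13 by apply: val_inj; rewrite /= inordK.
    by rewrite e h13 in his.
  have sT0 : s \notin T0.
    apply/negP => /imsetP [k _ ek]; move: hn; rewrite ek !inE !inordK //.
  case: (hAB s sT sT0) => [[hA [j hj hj']] | [hB [j hj hj']]].
  - move: hj; rewrite !inE => /orP[/eqP ej|/orP[/eqP ej|/eqP ej]]; subst j.
    + have hsep : forall i : 'I_14, i \in s -> val i \notin [:: 12; 3; 6; 7; 8; 9].
        by move=> i his; move: (hA i his) (hj' i his); rewrite !inE; lia.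
    have [r er] := @factor s [:: 12; 3; 6; 7; 8; 9] isT isT
      (fun i his => hsep i his).
    have [k hk] : exists k, in_ideal G ((X 12 * X 3 * X 6 * X 7 * X 8 * X 9) ^+ k).
      apply: (@main_abs Rpoly (in_ideal G) I0 IDd IM (lam%:MP) ((lam^-1)%:MP) (((3:CC)^-1)%:MP)
        (X 12) (X 13) (X 0) (X 1) (X 2) (X 6) (X 7) (X 8) (X 3) (X 4) (X 5) (X 9) (X 10) (X 11)) => //.
      * by apply: (IE _ _ (HJ 3 isT)); ring.
      * by apply: (IE _ _ (HD 0 isT)); rewrite dw0 /=; ring.
      * by apply: (IE _ _ (HD 6 isT)); rewrite dw6 /=; ring.
      * by apply: (IE _ _ (HD 3 isT)); rewrite dw3 /=; ring.
      * by apply: (IE _ _ (HD 4 isT)); rewrite dw4 /=; ring.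
      * by apply: (IE _ _ (HD 5 isT)); rewrite dw5 /=; ring.
      * by apply: (IE _ _ (HD 13 isT)); rewrite dw13 /=; ring.
    exists k; rewrite er exprMn mulrC; apply: IM.
    by apply: (IE _ _ hk); rewrite !big_cons big_nil; congr (_ ^+ _); ring.
    + have hsep : forall i : 'I_14, i \in s -> val i \notin [:: 12; 4; 6; 7; 8; 10].
        by move=> i his; move: (hA i his) (hj' i his); rewrite !inE; lia.
    have [r er] := @factor s [:: 12; 4; 6; 7; 8; 10] isT isT
      (fun i his => hsep i his).
    have [k hk] : exists k, in_ideal G ((X 12 * X 4 * X 6 * X 7 * X 8 * X 10) ^+ k).
      apply: (@main_abs Rpoly (in_ideal G) I0 IDd IM (lam%:MP) ((lam^-1)%:MP) (((3:CC)^-1)%:MP)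
        (X 12) (X 13) (X 0) (X 1) (X 2) (X 6) (X 7) (X 8) (X 4) (X 3) (X 5) (X 10) (X 9) (X 11)) => //.
      * by apply: (IE _ _ (HJ 4 isT)); ring.
      * by apply: (IE _ _ (HD 0 isT)); rewrite dw0 /=; ring.
      * by apply: (IE _ _ (HD 6 isT)); rewrite dw6 /=; ring.
      * by apply: (IE _ _ (HD 4 isT)); rewrite dw4 /=; ring.
      * by apply: (IE _ _ (HD 3 isT)); rewrite dw3 /=; ring.
      * by apply: (IE _ _ (HD 5 isT)); rewrite dw5 /=; ring.
      * by apply: (IE _ _ (HD 13 isT)); rewrite dw13 /=; ring.
    exists k; rewrite er exprMn mulrC; apply: IM.
    by apply: (IE _ _ hk); rewrite !big_cons big_nil; congr (_ ^+ _); ring.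
    + have hsep : forall i : 'I_14, i \in s -> val i \notin [:: 12; 5; 6; 7; 8; 11].
        by move=> i his; move: (hA i his) (hj' i his); rewrite !inE; lia.
    have [r er] := @factor s [:: 12; 5; 6; 7; 8; 11] isT isT
      (fun i his => hsep i his).
    have [k hk] : exists k, in_ideal G ((X 12 * X 5 * X 6 * X 7 * X 8 * X 11) ^+ k).
      apply: (@main_abs Rpoly (in_ideal G) I0 IDd IM (lam%:MP) ((lam^-1)%:MP) (((3:CC)^-1)%:MP)
        (X 12) (X 13) (X 0) (X 1) (X 2) (X 6) (X 7) (X 8) (X 5) (X 3) (X 4) (X 11) (X 9) (X 10)) => //.
      * by apply: (IE _ _ (HJ 5 isT)); ring.
      * by apply: (IE _ _ (HD 0 isT)); rewrite dw0 /=; ring.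
      * by apply: (IE _ _ (HD 6 isT)); rewrite dw6 /=; ring.
      * by apply: (IE _ _ (HD 5 isT)); rewrite dw5 /=; ring.
      * by apply: (IE _ _ (HD 3 isT)); rewrite dw3 /=; ring.
      * by apply: (IE _ _ (HD 4 isT)); rewrite dw4 /=; ring.
      * by apply: (IE _ _ (HD 13 isT)); rewrite dw13 /=; ring.
    exists k; rewrite er exprMn mulrC; apply: IM.
    by apply: (IE _ _ hk); rewrite !big_cons big_nil; congr (_ ^+ _); ring.
  - move: hj; rewrite !inE => /orP[/eqP ej|/orP[/eqP ej|/eqP ej]]; subst j.
    + have hsep : forall i : 'I_14, i \in s -> val i \notin [:: 13; 0; 9; 10; 11; 6].
        by move=> i his; move: (hB i his) (hj' i his); rewrite !inE; lia.
    have [r er] := @factor s [:: 13; 0; 9; 10; 11; 6] isT isT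
      (fun i his => hsep i his).
    have [k hk] : exists k, in_ideal G ((X 13 * X 0 * X 9 * X 10 * X 11 * X 6) ^+ k).
      apply: (@main_abs Rpoly (in_ideal G) I0 IDd IM (lam%:MP) ((lam^-1)%:MP) (((3:CC)^-1)%:MP)
        (X 13) (X 12) (X 3) (X 4) (X 5) (X 9) (X 10) (X 11) (X 0) (X 1) (X 2) (X 6) (X 7) (X 8)) => //.
      * by apply: (IE _ _ (HJ 0 isT)); ring.
      * by apply: (IE _ _ (HD 3 isT)); rewrite dw3 /=; ring.
      * by apply: (IE _ _ (HD 9 isT)); rewrite dw9 /=; ring.
      * by apply: (IE _ _ (HD 0 isT)); rewrite dw0 /=; ring.
      * by apply: (IE _ _ (HD 1 isT)); rewrite dw1 /=; ring.
      * by apply: (IE _ _ (HD 2 isT)); rewrite dw2 /=; ring.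
      * by apply: (IE _ _ (HD 12 isT)); rewrite dw12 /=; ring.
    exists k; rewrite er exprMn mulrC; apply: IM.
    by apply: (IE _ _ hk); rewrite !big_cons big_nil; congr (_ ^+ _); ring.
    + have hsep : forall i : 'I_14, i \in s -> val i \notin [:: 13; 1; 9; 10; 11; 7].
        by move=> i his; move: (hB i his) (hj' i his); rewrite !inE; lia.
    have [r er] := @factor s [:: 13; 1; 9; 10; 11; 7] isT isT
      (fun i his => hsep i his).
    have [k hk] : exists k, in_ideal G ((X 13 * X 1 * X 9 * X 10 * X 11 * X 7) ^+ k).
      apply: (@main_abs Rpoly (in_ideal G) I0 IDd IM (lam%:MP) ((lam^-1)%:MP) (((3:CC)^-1)%:MP)
        (X 13) (X 12) (X 3) (X 4) (X 5) (X 9) (X 10) (X 11) (X 1) (X 0) (X 2) (X 7) (X 6) (X 8)) => //.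
      * by apply: (IE _ _ (HJ 1 isT)); ring.
      * by apply: (IE _ _ (HD 3 isT)); rewrite dw3 /=; ring.
      * by apply: (IE _ _ (HD 9 isT)); rewrite dw9 /=; ring.
      * by apply: (IE _ _ (HD 1 isT)); rewrite dw1 /=; ring.
      * by apply: (IE _ _ (HD 0 isT)); rewrite dw0 /=; ring.
      * by apply: (IE _ _ (HD 2 isT)); rewrite dw2 /=; ring.
      * by apply: (IE _ _ (HD 12 isT)); rewrite dw12 /=; ring.
    exists k; rewrite er exprMn mulrC; apply: IM.
    by apply: (IE _ _ hk); rewrite !big_cons big_nil; congr (_ ^+ _); ring.
    + have hsep : forall i : 'I_14, i \in s -> val i \notin [:: 13; 2; 9; 10; 11; 8].
        by move=> i his; move: (hB i his) (hj' i his); rewrite !inE; lia.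
    have [r er] := @factor s [:: 13; 2; 9; 10; 11; 8] isT isT
      (fun i his => hsep i his).
    have [k hk] : exists k, in_ideal G ((X 13 * X 2 * X 9 * X 10 * X 11 * X 8) ^+ k).
      apply: (@main_abs Rpoly (in_ideal G) I0 IDd IM (lam%:MP) ((lam^-1)%:MP) (((3:CC)^-1)%:MP)
        (X 13) (X 12) (X 3) (X 4) (X 5) (X 9) (X 10) (X 11) (X 2) (X 0) (X 1) (X 8) (X 6) (X 7)) => //.
      * by apply: (IE _ _ (HJ 2 isT)); ring.
      * by apply: (IE _ _ (HD 3 isT)); rewrite dw3 /=; ring.
      * by apply: (IE _ _ (HD 9 isT)); rewrite dw9 /=; ring.
      * by apply: (IE _ _ (HD 2 isT)); rewrite dw2 /=; ring.
      * by apply: (IE _ _ (HD 0 isT)); rewrite dw0 /=; ring.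
      * by apply: (IE _ _ (HD 1 isT)); rewrite dw1 /=; ring.
      * by apply: (IE _ _ (HD 12 isT)); rewrite dw12 /=; ring.
    exists k; rewrite er exprMn mulrC; apply: IM.
    by apply: (IE _ _ hk); rewrite !big_cons big_nil; congr (_ ^+ _); ring.
case=> n [r [g [hg ->]]].
apply: (big_ind (in_radical G)).
- by exists 1%N; rewrite expr1.
- by move=> x y [a ha] [b hb]; exists (a + b)%N; apply: rad_add.
- move=> k _; case: (Key _ (hg k)) => m hm; exists m; rewrite exprMn; exact: IM.
Qed.
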